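(* Let $(I,<,\mathcal X,R,\mathrm{Mor})$ be a regular groupoid spine. Then: (1) there is a symmetric set $S$ with $R\subseteq S\subseteq I^2$ such that $(I,<,\mathcal X,R,\mathrm{Mor})$ extends to $S$; (2) in particular, if $|I|\ge 3$ then $(I,<,\mathcal X,R,\mathrm{Mor})$ extends to a groupoid.
   Context: A groupoid spine $(I,<,\mathcal X,R,\mathrm{Mor})$ consists of a linear order $(I,<)$, nonempty sets $\mathcal X=\{X_i:i\in I\}$, a nonempty relation $R\subseteq I^2$ containing all $(i,j)$ with $i<j$, and for each $(i,j)\in R$ a nonempty set $\operatorname{Mor}(i,j)$ of bijections $X_i\to X_j$, such that: if $(i,i)\in R$ then $\mathrm{id}_{X_i}\in\operatorname{Mor}(i,i)$; if $(i,j),(j,i)\in R$ and $f\in\operatorname{Mor}(i,j)$ then $f^{-1}\in\operatorname{Mor}(j,i)$; if $(i,j),(j,k),(i,k)\in R$, $f\in\operatorname{Mor}(i,j)$, $g\in\operatorname{Mor}(j,k)$ then $g\circ f\in\operatorname{Mor}(i,k)$. It is regular if for all $(i,j)\in R$, $x\in X_i$, $y\in X_j$ there is exactly one $f\in\operatorname{Mor}(i,j)$ with $f(x)=y$. For $R\subseteq S\subseteq I^2$, the spine extends to $S$ if one can define $\operatorname{Mor}(i,j)$ for $(i,j)\in S\setminus R$ (keeping $\operatorname{Mor}(i,j)$ unchanged for $(i,j)\in R$) so that $(I,<,\mathcal X,S,\mathrm{Mor})$ is a groupoid spine; it extends to a groupoid if it extends to $S=I^2$. $S$ is symmetric if $(i,j)\in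 S$ implies $(j,i)\in S$. *)

(* Defs.v *)
Set Implicit Arguments.

Definition strict_linear_order (I : Type) (lt : I -> I -> Prop) : Prop :=
  (forall i, ~ lt i i) /\
  (forall i j k, lt i j -> lt j k -> lt i k) /\
  (forall i j, lt i j \/ i = j \/ lt j i).

Definition bijection (A B : Type) (f : A -> B) : Prop :=
  (forall x y, f x = f y -> x = y) /\ (forall y, exists x, f x = y).

(* A groupoid spine (I,<,X,R,Mor).  Mor i j is a set of functions
   X i -> X j; only its values for (i,j) in R are meaningful. *)
Definition groupoid_spine (I : Type) (lt : I -> I -> Prop) (X : I -> Type)
    (R : I -> I -> Prop) (Mor : forall i j, (X i -> X j) -> Prop) : Prop :=
  strict_linear_order lt /\
  (forall i, inhabited (X i)) /\
  (exists i j, R i j) /\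
  (forall i j, lt i j -> R i j) /\
  (forall i j, R i j -> exists f, Mor i j f) /\
  (forall i j, R i j -> forall f, Mor i j f -> bijection f) /\
  (forall i, R i i -> Mor i i (fun x => x)) /\
  (forall i j, R i j -> R j i -> forall f, Mor i j f ->
     exists g, Mor j i g /\ (forall x, g (f x) = x) /\ (forall y, f (g y) = y)) /\
  (forall i j k, R i j -> R j k -> R i k -> forall f g,
     Mor i j f -> Mor j k g -> Mor i k (fun x => g (f x))).

Definition regular_spine (I : Type) (X : I -> Type) (R : I -> I -> Prop)
    (Mor : forall i j, (X i -> X j) -> Prop) : Prop :=
  forall i j, R i j -> forall (x : X i) (y : X j),
    exists! f, Mor i j f /\ f x = y.

(* The spine extends to S (R ⊆ S assumed separately): Mor can be defined
   on S \ R, keeping it unchanged on R, to give a groupoid spine. *)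
Definition spine_extends_to (I : Type) (lt : I -> I -> Prop) (X : I -> Type)
    (R : I -> I -> Prop) (Mor : forall i j, (X i -> X j) -> Prop)
    (S : I -> I -> Prop) : Prop :=
  exists Mor' : forall i j, (X i -> X j) -> Prop,
    (forall i j, R i j -> forall f, Mor' i j f <-> Mor i j f) /\
    groupoid_spine lt X S Mor'.

Definition symmetric_rel (I : Type) (S : I -> I -> Prop) : Prop :=
  forall i j, S i j -> S j i.

(* Main.v *)
Require Import Defs.
From Stdlib Require Import Classical FunctionalExtensionality ClassicalEpsilon.
Set Implicit Arguments.

Definition Mx {I : Type} {X : I -> Type} (R : I -> I -> Prop)
  (Mor : forall i j, (X i -> X j) -> Prop) (i j : I) (h : X i -> X j) : Prop :=
  (R i j /\ Mor i j h) \/ (R j i /\ exists g, Mor j i g /\ forall x, g (h x) = x).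

Definition Sx {I : Type} (R : I -> I -> Prop) i j := R i j \/ R j i.

Definition Cx {I : Type} {X : I -> Type} (R : I -> I -> Prop)
  (Mor : forall i j, (X i -> X j) -> Prop) (i j m : I) :=
  forall p q, Mx R Mor i j p -> Mx R Mor j m q -> Mx R Mor i m (fun x => q (p x)).

Ltac dG G := destruct G as (Hord & Hinh & Hex & Hlt & Hne & Hbij & Hid & Hinv & Hcomp).

Lemma bij_inv (A B : Type) (f : A -> B) : bijection f ->
  exists g, (forall x, g (f x) = x) /\ (forall y, f (g y) = y).
Proof.
  intros [Hi Hs].
  exists (fun y => proj1_sig (constructive_indefinite_description _ (Hs y))).
  split.
  - intros x. apply Hi. destruct (constructive_indefinite_description _ (Hs (f x))); auto.
  - intros y. destruct (constructive_indefinite_description _ (Hs y)); auto.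
Qed.

Lemma inv_bij (A B : Type) (f : A -> B) g :
  (forall x, g (f x) = x) -> (forall y, f (g y) = y) -> bijection f.
Proof.
  intros H1 H2. split.
  - intros x y E. rewrite <- (H1 x), <- (H1 y), E. auto.
  - intros y. exists (g y). auto.
Qed.


Lemma agree1 I lt X R Mor (G : @groupoid_spine I lt X R Mor) i j h :
  Mx R Mor i j h -> R i j -> Mor i j h.
Proof.
  dG G. intros [[_ H]|[Hji [g [Hg E]]]] Hij; auto.
  destruct (Hinv j i Hji Hij g Hg) as [g' [Hg' [E1 E2]]].
  replace h with g'; auto.
  extensionality x. transitivity (g' (g (h x))). rewrite E; auto. apply E1.
Qed.

Lemma agree2 I lt X R Mor (G : @groupoid_spine I lt X R Mor) i j h :
  Mx R Mor i j h -> R j i -> exists g, Mor j i g /\ forall x, g (h x) = x.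
Proof.
  dG G. intros [[Hij H]|[_ H]] Hji; auto.
  destruct (Hinv i j Hij Hji h H) as [g' [Hg' [E1 E2]]]. eauto.
Qed.

Lemma regM_ex I lt X R Mor (G : @groupoid_spine I lt X R Mor)
  (Rg : regular_spine X R Mor) i j : Sx R i j ->
  forall x y, exists h, Mx R Mor i j h /\ h x = y.
Proof.
  intros S x y. pose proof G as G'. dG G. destruct S as [S|S].
  - destruct (Rg i j S x y) as [h [[H1 H2] _]]. exists h. split; auto. left; auto.
  - destruct (Rg j i S y x) as [f [[H1 H2] _]].
    destruct (bij_inv (Hbij j i S f H1)) as [g [E1 E2]].
    exists g. split.
    + right. split; auto. exists f. auto.
    + rewrite <- H2. auto.
Qed.

Lemma regM_un I lt X R Mor (G : @groupoid_spine I lt X R Mor)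
  (Rg : regular_spine X R Mor) i j : Sx R i j ->
  forall h h' x, Mx R Mor i j h -> Mx R Mor i j h' -> h x = h' x -> h = h'.
Proof.
  intros S h h' x M1 M2 E. pose proof G as G'. dG G. destruct S as [S|S].
  - pose proof (agree1 G' M1 S). pose proof (agree1 G' M2 S).
    destruct (Rg i j S x (h x)) as [u [_ U]].
    transitivity u; [symmetry|]; apply U; auto.
  - destruct (agree2 G' M1 S) as [f [Hf Ef]].
    destruct (agree2 G' M2 S) as [f' [Hf' Ef']].
    assert (f = f').
    { destruct (Rg j i S (h x) x) as [u [_ U]].
      transitivity u; [symmetry|]; apply U; split; auto. rewrite E; auto. }
    subst f'. destruct (Hbij j i S f Hf) as [Inj _].
    extensionality z. apply Inj. rewrite Ef, Ef'. auto.
Qed.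

Lemma invM I lt X R Mor (G : @groupoid_spine I lt X R Mor) i j h : Sx R i j ->
  Mx R Mor i j h -> exists g, Mx R Mor j i g /\ (forall x, g (h x) = x) /\ (forall y, h (g y) = y).
Proof.
  intros S M. pose proof G as G'. dG G. destruct S as [S|S].
  - pose proof (agree1 G' M S).
    destruct (bij_inv (Hbij i j S h H)) as [g [E1 E2]].
    exists g. split; auto. right. split; auto. exists h; auto.
  - destruct (agree2 G' M S) as [f [Hf Ef]].
    exists f. split; [left; auto|]. split; auto.
    intros y. destruct (Hbij j i S f Hf) as [Inj _]. apply Inj. rewrite Ef. auto.
Qed.

Lemma bijM I lt X R Mor (G : @groupoid_spine I lt X R Mor) i j h : Sx R i j ->
  Mx R Mor i j h -> bijection h.
Proof.
  intros S M. destruct (invM G S M) as [g [_ [E1 E2]]]. eapply inv_bij; eauto.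
Qed.

Lemma Sx_sym I (R : I -> I -> Prop) i j : Sx R i j -> Sx R j i.
Proof. unfold Sx; tauto. Qed.

Lemma rotC I lt X R Mor (G : @groupoid_spine I lt X R Mor)
  (Rg : regular_spine X R Mor) i j m :
  Sx R i j -> Sx R j m -> Sx R i m -> Cx R Mor i j m -> Cx R Mor j m i.
Proof.
  intros Sij Sjm Sim C p q Mp Mq. pose proof G as G'. dG G.
  destruct (Hinh j) as [x0].
  destruct (regM_ex G' Rg (Sx_sym Sij) x0 (q (p x0))) as [s [Ms Es]].
  destruct (invM G' (Sx_sym Sij) Ms) as [s' [Ms' [E1 E2]]].
  pose proof (C _ _ Ms' Mp) as Mps.
  destruct (invM G' (Sx_sym Sim) Mq) as [q' [Mq' [F1 F2]]].
  assert (Eq : (fun z => p (s' z)) = q').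
  { apply (regM_un G' Rg Sim (s x0) Mps Mq'). rewrite E1, Es, F1. auto. }
  replace (fun y => q (p y)) with s; auto.
  extensionality y. rewrite <- (E1 y) at 2.
  change (p (s' (s y))) with ((fun z => p (s' z)) (s y)). rewrite Eq. auto.
Qed.

Lemma revC I lt X R Mor (G : @groupoid_spine I lt X R Mor)
  (Rg : regular_spine X R Mor) i j m :
  Sx R i j -> Sx R j m -> Sx R i m -> Cx R Mor i j m -> Cx R Mor m j i.
Proof.
  intros Sij Sjm Sim C p' q' Mp Mq. pose proof G as G'. dG G.
  destruct (invM G' (Sx_sym Sjm) Mp) as [a [Ma [A1 A2]]].
  destruct (invM G' (Sx_sym Sij) Mq) as [b [Mb [B1 B2]]].
  pose proof (C _ _ Mb Ma) as Mab.
  destruct (invM G' Sim Mab) as [c [Mc [C1 C2]]].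
  replace (fun x => q' (p' x)) with c; auto.
  extensionality v. rewrite <- (C2 v) at 2. rewrite A2, B2. auto.
Qed.

Lemma baseC I lt X R Mor (G : @groupoid_spine I lt X R Mor) x y z :
  R x y -> R y z -> R x z -> Cx R Mor x y z.
Proof.
  intros H1 H2 H3 p q Mp Mq. pose proof G as G'. dG G.
  left. split; auto. apply Hcomp with y; auto; eapply agree1; eauto.
Qed.

Lemma allC I lt X R Mor (G : @groupoid_spine I lt X R Mor)
  (Rg : regular_spine X R Mor) x y z :
  R x y -> R y z -> R x z ->
  Cx R Mor x y z /\ Cx R Mor y z x /\ Cx R Mor z x y /\
  Cx R Mor z y x /\ Cx R Mor y x z /\ Cx R Mor x z y.
Proof.
  intros H1 H2 H3.
  assert (Sxy : Sx R x y) by (left; auto).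
  assert (Syz : Sx R y z) by (left; auto).
  assert (Sxz : Sx R x z) by (left; auto).
  pose proof (Sx_sym Sxy). pose proof (Sx_sym Syz). pose proof (Sx_sym Sxz).
  pose proof (baseC G H1 H2 H3) as C1.
  pose proof (rotC G Rg Sxy Syz Sxz C1) as C2.
  pose proof (rotC G Rg Syz H4 H C2) as C3.
  pose proof (revC G Rg Sxy Syz Sxz C1) as C4.
  pose proof (rotC G Rg H0 H H4 C4) as C5.
  pose proof (rotC G Rg H Sxz Syz C5) as C6.
  tauto.
Qed.

Lemma compM I lt X R Mor (G : @groupoid_spine I lt X R Mor)
  (Rg : regular_spine X R Mor) i j m :
  Sx R i j -> Sx R j m -> Sx R i m -> Cx R Mor i j m.
Proof.
  intros Sij Sjm Sim. pose proof G as G'. dG G.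
  destruct Hord as (Irr & Tr & Tri).
  destruct (classic (i = j)) as [E|Nij].
  { subst j. assert (R i i) by (destruct Sij; auto).
    destruct Sim as [Hx|Hx].
    - apply (baseC G'); auto.
    - pose proof (allC G' Rg _ _ _ Hx H Hx). tauto. }
  destruct (classic (j = m)) as [E|Njm].
  { subst m. assert (R j j) by (destruct Sjm; auto).
    destruct Sij as [Hx|Hx].
    - apply (baseC G'); auto.
    - pose proof (allC G' Rg _ _ _ H Hx Hx). tauto. }
  destruct (classic (i = m)) as [E|Nim].
  { subst m. assert (R i i) by (destruct Sim; auto).
    destruct Sij as [Hx|Hx].
    - pose proof (allC G' Rg _ _ _ H Hx Hx). tauto.
    - pose proof (allC G' Rg _ _ _ Hx H Hx). tauto. }
  destruct (Tri i j) as [Lij|[E|Lji]]; [|contradiction|];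
  (destruct (Tri j m) as [Ljm|[E|Lmj]]; [|contradiction|]);
  (destruct (Tri i m) as [Lim|[E|Lmi]]; [|contradiction|]);
  try (exfalso; apply (Irr i); eauto; fail);
  try (exfalso; apply (Irr j); eauto; fail);
  repeat match goal with H : lt _ _ |- _ => apply Hlt in H end.
  all: first
   [ pose proof (allC G' Rg _ _ _ Lij Ljm Lim); tauto
   | pose proof (allC G' Rg _ _ _ Lij Lmj Lim); tauto
   | pose proof (allC G' Rg _ _ _ Lim Lmj Lij); tauto
   | pose proof (allC G' Rg _ _ _ Lji Lim Ljm); tauto
   | pose proof (allC G' Rg _ _ _ Ljm Lmi Lji); tauto
   | pose proof (allC G' Rg _ _ _ Lmj Lji Lmi); tauto
   | pose proof (allC G' Rg _ _ _ Lmi Lij Lmj); tauto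
   ].
Qed.

Lemma part1 I lt X R Mor (G : @groupoid_spine I lt X R Mor)
  (Rg : regular_spine X R Mor) :
  exists S : I -> I -> Prop,
     symmetric_rel S /\ (forall i j, R i j -> S i j) /\
     spine_extends_to lt X R Mor S.
Proof.
  exists (Sx R). split; [intros i j; apply Sx_sym|]. split; [intros; left; auto|].
  exists (Mx R Mor). split.
  - intros i j Hij f. split; [intro; eapply agree1; eauto | intro; left; auto].
  - pose proof G as G'. dG G. split; [auto|]. split; [auto|].
    split. { destruct Hex as [i [j H]]. exists i, j. left; auto. }
    split. { intros; left; auto. }
    split. { intros i j S. destruct (Hinh i) as [x]. destruct (Hinh j) as [y].
             destruct (regM_ex G' Rg S x y) as [h [Mh _]]. eauto. }
    split. { intros i j S f M. eapply bijM; eauto. }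
    split. { intros i [H|H]; left; auto. }
    split. { intros i j S _ f M. destruct (invM G' S M) as [g ?]. eauto. }
    intros i j k S1 S2 S3 f g M1 M2. exact (compM G' Rg S1 S2 S3 M1 M2).
Qed.

Definition Tx {I : Type} {X : I -> Type} (R : I -> I -> Prop)
  (Mor : forall i j, (X i -> X j) -> Prop) (i j : I) (h : X i -> X j) : Prop :=
  exists k, k <> i /\ k <> j /\ exists a b, Mx R Mor i k a /\ Mx R Mor j k b /\
    forall x, b (h x) = a x.

Lemma distS I lt X R Mor (G : @groupoid_spine I lt X R Mor) i j :
  i <> j -> Sx R i j.
Proof.
  intros N. dG G. destruct Hord as (_ & _ & Tri).
  destruct (Tri i j) as [H|[H|H]]; [left; auto|contradiction|right; auto].
Qed.

Lemma neM I lt X R Mor (G : @groupoid_spine I lt X R Mor)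
  (Rg : regular_spine X R Mor) i j : i <> j -> exists h, Mx R Mor i j h.
Proof.
  intros N. pose proof G as G'. dG G.
  destruct (Hinh i) as [x]. destruct (Hinh j) as [y].
  destruct (regM_ex G' Rg (distS G' N) x y) as [h [Mh _]]. eauto.
Qed.

Lemma compD I lt X R Mor (G : @groupoid_spine I lt X R Mor)
  (Rg : regular_spine X R Mor) i j m : i <> j -> j <> m -> i <> m ->
  Cx R Mor i j m.
Proof.
  intros. apply (compM G Rg); apply (distS G); auto.
Qed.

Lemma three I (a b c : I) : a <> b -> a <> c -> b <> c ->
  forall i j : I, exists k, k <> i /\ k <> j.
Proof.
  intros. destruct (classic (a = i)), (classic (a = j)), (classic (b = i)), (classic (b = j));
  subst; try (exists a; split; congruence); try (exists b; split; congruence);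
  exists c; split; congruence.
Qed.

Lemma TM I lt X R Mor (G : @groupoid_spine I lt X R Mor)
  (Rg : regular_spine X R Mor) i j h : i <> j -> Tx R Mor i j h -> Mx R Mor i j h.
Proof.
  intros N [k [Ni [Nj [a [b [Ma [Mb E]]]]]]].
  destruct (invM G (distS G (not_eq_sym Nj)) Mb) as [b' [Mb' [E1 E2]]].
  pose proof (compD G Rg (not_eq_sym Ni) Nj N Ma Mb') as M.
  replace h with (fun x => b' (a x)); auto.
  extensionality x. rewrite <- E. auto.
Qed.

Lemma MT I lt X R Mor (G : @groupoid_spine I lt X R Mor)
  (Rg : regular_spine X R Mor) (E3 : forall i j : I, exists k, k <> i /\ k <> j)
  i j h : i <> j -> Mx R Mor i j h -> Tx R Mor i j h.
Proof.
  intros N M. destruct (E3 i j) as [k [Ni Nj]].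
  destruct (neM G Rg (not_eq_sym Nj)) as [b Mb].
  exists k. split; auto. split; auto. exists (fun x => b (h x)), b.
  split; [|split; auto]. exact (compD G Rg N (not_eq_sym Nj) (not_eq_sym Ni) M Mb).
Qed.

Lemma Vlem I lt X R Mor (G : @groupoid_spine I lt X R Mor)
  (Rg : regular_spine X R Mor) (E3 : forall i j : I, exists k, k <> i /\ k <> j)
  i j k h a b b' : k <> i -> k <> j -> Mx R Mor i k a -> Mx R Mor j k b ->
  (forall x, b (h x) = a x) -> Mx R Mor j k b' -> Mx R Mor i k (fun x => b' (h x)).
Proof.
  intros Ni Nj Ma Mb E Mb'.
  destruct (classic (i = j)) as [Eij|Nij].
  2:{ assert (Mh : Mx R Mor i j h) by (apply (TM G Rg Nij); exists k; eauto 10).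
      exact (compD G Rg Nij (not_eq_sym Nj) (not_eq_sym Ni) Mh Mb'). }
  subst j.
  destruct (E3 i k) as [l [Li Lk]].
  destruct (neM G Rg (not_eq_sym Li)) as [p Mp].
  destruct (invM G (distS G (not_eq_sym Li)) Mp) as [p' [Mp' [P1 P2]]].
  pose proof (compD G Rg Li (not_eq_sym Ni) Lk Mp' Mb) as Mq.
  pose proof (compD G Rg Li (not_eq_sym Ni) Lk Mp' Mb') as Mq'.
  destruct (invM G (distS G Lk) Mq) as [qi [Mqi [Q1 Q2]]].
  pose proof (compD G Rg (not_eq_sym Ni) (not_eq_sym Lk) (not_eq_sym Li) Ma Mqi) as M1.
  pose proof (compD G Rg (not_eq_sym Li) Lk (not_eq_sym Ni) M1 Mq') as M2.
  simpl in M2.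
  assert (Eph : forall x, p (h x) = qi (a x)).
  { intros x. rewrite <- E. rewrite <- (Q1 (p (h x))). rewrite P1. auto. }
  replace (fun x => b' (h x)) with (fun x => b' (p' (qi (a x)))); auto.
  extensionality x. rewrite <- Eph, P1. auto.
Qed.

Lemma Wlem I lt X R Mor (G : @groupoid_spine I lt X R Mor)
  (Rg : regular_spine X R Mor)
  i j k l h a b : k <> i -> k <> j -> Mx R Mor i k a -> Mx R Mor j k b ->
  (forall x, b (h x) = a x) -> l <> i -> l <> j ->
  exists a' b', Mx R Mor i l a' /\ Mx R Mor j l b' /\ forall x, b' (h x) = a' x.
Proof.
  intros Ni Nj Ma Mb E Li Lj.
  destruct (classic (k = l)) as [Ekl|Nkl]. { subst l. eauto. }
  destruct (neM G Rg Nkl) as [c Mc].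
  exists (fun x => c (a x)), (fun y => c (b y)). split; [|split].
  - exact (compD G Rg (not_eq_sym Ni) Nkl (not_eq_sym Li) Ma Mc).
  - exact (compD G Rg (not_eq_sym Nj) Nkl (not_eq_sym Lj) Mb Mc).
  - intros x. rewrite E. auto.
Qed.

Lemma Tcomp I lt X R Mor (G : @groupoid_spine I lt X R Mor)
  (Rg : regular_spine X R Mor) (a0 b0 c0 : I)
  (D1 : a0 <> b0) (D2 : a0 <> c0) (D3 : b0 <> c0) i j m h1 h2 :
  Tx R Mor i j h1 -> Tx R Mor j m h2 -> Tx R Mor i m (fun x => h2 (h1 x)).
Proof.
  intros T1 T2. pose proof (three D1 D2 D3) as E3.
  destruct (classic (exists l, l <> i /\ l <> j /\ l <> m)) as [[l [Li [Lj Lm]]]|NE].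
  - destruct T1 as [k [Ni [Nj [a [b [Ma [Mb E]]]]]]].
    destruct (Wlem G Rg _ Ni Nj Ma Mb E Li Lj) as [a1 [b1 [Ma1 [Mb1 E1]]]].
    destruct T2 as [k' [Nj' [Nm' [a' [b' [Ma' [Mb' E']]]]]]].
    destruct (Wlem G Rg _ Nj' Nm' Ma' Mb' E' Lj Lm) as [a2 [b2 [Ma2 [Mb2 E2]]]].
    exists l. split; auto. split; auto.
    exists (fun x => a2 (h1 x)), b2. split; [|split].
    + exact (Vlem G Rg E3 _ Li Lj Ma1 Mb1 E1 Ma2).
    + auto.
    + intros x. apply E2.
  - assert (All : forall l, l = i \/ l = j \/ l = m).
    { intros l. apply NNPP. intro C. apply NE. exists l. tauto. }
    pose proof (All a0). pose proof (All b0). pose proof (All c0).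
    assert (Nij : i <> j) by (intro; subst; intuition congruence).
    assert (Njm : j <> m) by (intro; subst; intuition congruence).
    assert (Nim : i <> m) by (intro; subst; intuition congruence).
    apply (MT G Rg E3 Nim).
    exact (compD G Rg Nij Njm Nim (TM G Rg Nij T1) (TM G Rg Njm T2)).
Qed.

Lemma part2 I lt X R Mor (G : @groupoid_spine I lt X R Mor)
  (Rg : regular_spine X R Mor) (a0 b0 c0 : I)
  (D1 : a0 <> b0) (D2 : a0 <> c0) (D3 : b0 <> c0) :
  spine_extends_to lt X R Mor (fun _ _ => True).
Proof.
  pose proof (three D1 D2 D3) as E3. pose proof G as G'. dG G.
  exists (Tx R Mor). split.
  - intros i j Hij f. destruct (classic (i = j)) as [Eij|Nij].
    2:{ split; intro H.
        - eapply agree1; eauto. apply (TM G' Rg Nij H).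
        - apply (MT G' Rg E3 Nij). left; auto. }
    subst j. split; intro H.
    + destruct H as [k [Ni [_ [a [b [Ma [Mb E]]]]]]].
      destruct (Hinh i) as [x0].
      destruct (Rg i i Hij x0 (f x0)) as [g [[Mg Eg] _]].
      assert (Mbg : Mx R Mor i k (fun x => b (g x))).
      { exact (compM G' Rg (or_introl Hij) (distS G' (not_eq_sym Ni)) (distS G' (not_eq_sym Ni))
          (or_introl (conj Hij Mg)) Mb). }
      assert (Ebg : (fun x => b (g x)) = a).
      { apply (regM_un G' Rg (distS G' (not_eq_sym Ni)) x0 Mbg Ma). rewrite Eg. auto. }
      replace f with g; auto.
      destruct (bijM G' (distS G' (not_eq_sym Ni)) Mb) as [Inj _].
      extensionality x. apply Inj. rewrite E. change (b (g x)) with ((fun x => b (g x)) x).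
      rewrite Ebg. auto.
    + destruct (E3 i i) as [k [Ni _]].
      destruct (neM G' Rg (not_eq_sym Ni)) as [b Mb].
      exists k. split; auto. split; auto. exists (fun x => b (f x)), b.
      split; [|split; auto].
      exact (compM G' Rg (or_introl Hij) (distS G' (not_eq_sym Ni)) (distS G' (not_eq_sym Ni))
          (or_introl (conj Hij H)) Mb).
  - split; [auto|]. split; [auto|].
    split. { exists a0, a0. auto. }
    split. { auto. }
    split.
    { intros i j _. destruct (E3 i j) as [k [Ni Nj]].
      destruct (neM G' Rg (not_eq_sym Ni)) as [a Ma].
      destruct (neM G' Rg (not_eq_sym Nj)) as [b Mb].
      destruct (invM G' (distS G' (not_eq_sym Nj)) Mb) as [b' [Mb' [B1 B2]]].
      exists (fun x => b' (a x)). exists k. split; auto. split; auto.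
      exists a, b. split; [auto|]. split; [auto|]. intros x. apply B2. }
    split.
    { intros i j _ h [k [Ni [Nj [a [b [Ma [Mb E]]]]]]].
      destruct (bijM G' (distS G' (not_eq_sym Ni)) Ma) as [Ia Sa].
      destruct (bijM G' (distS G' (not_eq_sym Nj)) Mb) as [Ib Sb].
      split.
      - intros x y Exy. apply Ia. rewrite <- !E, Exy. auto.
      - intros y. destruct (Sa (b y)) as [x Ex]. exists x. apply Ib. rewrite E. auto. }
    split.
    { intros i _. destruct (E3 i i) as [k [Ni _]].
      destruct (neM G' Rg (not_eq_sym Ni)) as [a Ma].
      exists k. split; auto. split; auto. exists a, a. auto. }
    split.
    { intros i j _ _ h [k [Ni [Nj [a [b [Ma [Mb E]]]]]]].
      destruct (invM G' (distS G' (not_eq_sym Ni)) Ma) as [a' [Ma' [A1 A2]]].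
      destruct (bijM G' (distS G' (not_eq_sym Nj)) Mb) as [Ib _].
      exists (fun y => a' (b y)). split; [|split].
      - exists k. split; [auto|]. split; [auto|]. exists b, a. split; [auto|]. split; [auto|]. intros y. apply A2.
      - intros x. rewrite E. auto.
      - intros y. apply Ib. rewrite E. auto. }
    intros i j k _ _ _ f g T1 T2. exact (Tcomp G' Rg D1 D2 D3 T1 T2).
Qed.

Theorem theorem7p7 (I : Type) (lt : I -> I -> Prop) (X : I -> Type)
    (R : I -> I -> Prop) (Mor : forall i j, (X i -> X j) -> Prop) :
  groupoid_spine lt X R Mor ->
  regular_spine X R Mor ->
  (exists S : I -> I -> Prop,
     symmetric_rel S /\ (forall i j, R i j -> S i j) /\
     spine_extends_to lt X R Mor S) /\
  ((exists a b c : I, a <> b /\ a <> c /\ b <> c) ->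
     spine_extends_to lt X R Mor (fun _ _ => True)).
Proof.
  intros G Rg. split.
  - exact (part1 G Rg).
  - intros [a [b [c [D1 [D2 D3]]]]]. exact (part2 G Rg D1 D2 D3).
Qed.
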